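(* Let $\nu$ be a probability density on $\mathsf{X}\subset\mathbb{R}^{d_{x}}$, for each $x\in\mathsf{X}$ let $f_{x}$ be a probability density on $\mathsf{Y}\subset\mathbb{R}^{d}$, fix $y\in\mathsf{Y}$ and $\epsilon>0$, and set $\ell_{\mathrm{ABC}}(x):=\mathbb{P}_{x}(|z-y|<\epsilon)$ for $z\sim f_{x}$, assumed positive for all $x$. Let $\pi(\mathrm{d}x)\propto\nu(x)\ell_{\mathrm{ABC}}(x)\mathrm{d}x$. For $N\in\mathbb{N}$ and $x\in\mathsf{X}$, let $z_{1},\dots,z_{N}\overset{\mathrm{iid}}{\sim}f_{x}$, $W_{j}:=1/\ell_{\mathrm{ABC}}(x)$ if $|z_{j}-y|<\epsilon$ and $W_{j}:=0$ otherwise, $\mathcal{W}_{N}:=\frac{1}{N}\sum_{j=1}^{N}W_{j}$, let $Q_{x}$ be the law of $\mathcal{W}_{N}$ and $\tilde{\pi}_{x}(\mathrm{d}w):=wQ_{x}(\mathrm{d}w)$. Let $p\in\mathbb{N}$ and suppose $\int_{\mathsf{X}}\nu(x)\ell_{\mathrm{ABC}}^{-(p-1)}(x)\,\mathrm{d}x<\infty$. Then there is $C_{N,p}>0$ such that for all $s>0$, \[ \int_{\mathsf{X}}\pi(\mathrm{d}x)\,\tilde{\pi}_{x}(\mathcal{W}_{N}\ge s)\le C_{N,p}\,s^{-p}, \] and $C_{N,p}=1+O(1/N)$ as $N\to\infty$. In particular, the hypothesis holds for $p=1$.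
   Context: $|\cdot|$ is the Euclidean norm. Under $Q_{x}$, $\mathcal{W}_{N}$ has mean $1$, and $\ell_{\mathrm{ABC}}(x)\sum_{j}W_{j}\sim\mathrm{Bin}(N,\ell_{\mathrm{ABC}}(x))$. *)

(* Defs.v *)
From HB Require Import structures.
From mathcomp Require Import all_boot all_order all_algebra.
From mathcomp Require Import all_classical all_reals all_analysis.
Set Implicit Arguments. Unset Strict Implicit. Unset Printing Implicit Defensive.
Import Order.TTheory GRing.Theory Num.Theory.
Local Open Scope ring_scope.

(* ABC likelihood: ell_ABC(x) = P_x(z in B), with B = {z | |z - y| < eps},
   z ~ f_x where f is the probability kernel x |-> law of z. *)
Definition ellABC (R : realType) (d d' : measure_display)
  (X : measurableType d) (Y : measurableType d') (f : R.-pker X ~> Y)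
  (B : set Y) (x : X) : R := fine (f x B).

(* The indicators b_j = 1{|z_j - y| < eps}, j < N, for z_1..z_N iid ~ f_x,
   are iid Bernoulli(l); this is their joint law on {0,1}^N. *)
Definition indic_law (R : realType) (N : nat) (l : R)
  (b : {ffun 'I_N -> bool}) : R :=
  \prod_(j < N) (if b j then l else 1 - l).

Definition WN (R : realType) (N : nat) (l : R) (b : {ffun 'I_N -> bool}) : R :=
  N%:R^-1 * \sum_(j < N) (if b j then l^-1 else 0).

(* tilde_pi_x(W_N >= s) = int w 1{w >= s} Q_x(dw) = E[W_N 1{W_N >= s}],
   Q_x being the law of W_N when the likelihood is l = ell_ABC(x). *)
Definition tilde_pi_tail (R : realType) (N : nat) (l s : R) : R :=
  \sum_(b : {ffun 'I_N -> bool})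
     indic_law l b * (WN l b * (if s <= WN l b then 1 else 0)).

Definition normconst (R : realType) (d : measure_display) (X : measurableType d)
  (mu : {measure set X -> \bar R}) (nu ell : X -> R) : R :=
  fine (\int[mu]_x (nu x * ell x)%:E)%E.

Definition pi_integral (R : realType) (d : measure_display) (X : measurableType d)
  (mu : {measure set X -> \bar R}) (nu ell : X -> R) (g : X -> R) : \bar R :=
  (\int[mu]_x ((nu x * ell x / normconst mu nu ell) * g x)%:E)%E.

(* Main.v *)
Require Import Defs.
From HB Require Import structures.
From mathcomp Require Import all_boot all_order all_algebra.
From mathcomp Require Import all_classical all_reals all_analysis.
Import Order.TTheory GRing.Theory Num.Theory.
Local Open Scope ring_scope.
From mathcomp Require Import zify ring lra measurable_realfun.
Lemma ffact_le_exp (N m : nat) : (N ^_ m <= N ^ m)%N.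
Proof.
elim: m => [|m IH]; first by rewrite ffactn0 expn0.
by rewrite ffactnSr expnS mulnC leq_mul // leq_subr.
Qed.

Lemma exp_ffact_bound (N m : nat) : (N ^ m <= N ^_ m + 'C(m, 2) * N ^ m.-1)%N.
Proof.
elim: m => [|m IH]; first by rewrite ffactn0 expn0 bin0n.
rewrite ffactnSr expnS binS bin1 /=.
have h1 := ffact_le_exp N m.
have h2 : ('C(m, 2) * N ^ m.-1 * N <= 'C(m, 2) * N ^ m)%N.
  case: m {IH h1} => [|m]; first by rewrite bin0n.
  by rewrite /= -mulnA -expnSr.
have h3 : (N <= (N - m) + m)%N by lia.
have h4 := leq_mul (leqnn N) IH.
rewrite mulnDr in h4.
set a := (N ^ m)%N in h1 h2 h4 *; set b := (N ^_ m)%N in h1 h2 h4 *.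
set c := 'C(m, 2) in h2 h4 *. set e := (N ^ m.-1)%N in h2 h4 *.
nia.
Qed.

Section comb.
Variable R : realType.

Lemma prod_natb (I : finType) (P : pred I) :
  \prod_(i : I) ((P i)%:R : R) = ([forall i, P i])%:R.
Proof.
case: forallP => [H|/existsNP [i Hi]].
  by apply: big1 => i _; rewrite H.
by rewrite (bigD1 i) //= (negbTE (introN idP Hi)) mul0r.
Qed.

Lemma sum_indic (N : nat) (l : R) (F : 'I_N -> bool -> R) :
  \sum_(b : {ffun 'I_N -> bool}) indic_law l b * \prod_j F j (b j)
  = \prod_j (l * F j true + (1 - l) * F j false).
Proof.
rewrite /indic_law.
rewrite (eq_bigr (fun b : {ffun 'I_N -> bool} =>
   \prod_j ((if b j then l else 1 - l) * F j (b j)))); last first.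
  by move=> b _; rewrite big_split.
rewrite -(@bigA_distr_bigA _ _ _ _ _ _ _ (fun j (v : bool) => (if v then l else 1 - l) * F j v)).
by apply: eq_bigr => j _; rewrite big_bool.
Qed.

Lemma expand_pow (N m : nat) (c : 'I_N -> R) :
  (\sum_j c j) ^+ m = \sum_(g : {ffun 'I_m -> 'I_N}) \prod_i c (g i).
Proof.
rewrite -(@bigA_distr_bigA _ _ _ _ _ _ _ (fun (i : 'I_m) j => c j)).
by rewrite prodr_const card_ord.
Qed.

Lemma Eg (N m : nat) (l : R) (g : {ffun 'I_m -> 'I_N}) :
  \sum_(b : {ffun 'I_N -> bool}) indic_law l b * \prod_i ((b (g i))%:R : R)
  = \prod_j (if j \in codom g then l else 1).
Proof.
have H0 : forall b : {ffun 'I_N -> bool}, \prod_i ((b (g i))%:R : R)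
   = \prod_j (if j \in codom g then ((b j)%:R : R) else 1).
  move=> b; rewrite prod_natb.
  have -> : \prod_j (if j \in codom g then ((b j)%:R : R) else 1)
      = \prod_j (((j \in codom g) ==> b j)%:R : R).
    by apply: eq_bigr => j _; case: (j \in codom g).
  rewrite prod_natb; congr (GRing.natmul _ (nat_of_bool _)).
  apply/idP/idP => /forallP H; apply/forallP => j.
    by apply/implyP => /codomP [i ->]; exact: H.
  by move/implyP: (H (g j)); apply; exact: codom_f.
rewrite (eq_bigr (fun b : {ffun 'I_N -> bool} => indic_law l b *
   \prod_j (if j \in codom g then ((b j)%:R : R) else 1))); last first.
  by move=> b _; rewrite H0.
rewrite (@sum_indic N l (fun j v => if j \in codom g then (v%:R : R) else 1)).
apply: eq_bigr => j _; case: (j \in codom g) => /=.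
  by rewrite mulr1 mulr0 addr0.
by rewrite !mulr1 addrC subrK.
Qed.

End comb.

Section comb2.
Variable R : realType.

Lemma Eg_le (N m : nat) (l : R) (g : {ffun 'I_m.+1 -> 'I_N}) : 0 <= l -> l <= 1 ->
  \prod_j (if j \in codom g then l else 1) <= l ^+ m.+1 + (if injectiveb g then 0 else l).
Proof.
move=> l0 l1; case: injectiveP => inj.
  rewrite addr0 -big_mkcond /= prodr_const.
  by rewrite (card_codom inj) card_ord.
rewrite (bigD1 (g ord0)) //= codom_f.
have h : \prod_(j | j != g ord0) (if j \in codom g then l else 1) <= 1.
  apply: prodr_ile1 => j _; case: (j \in codom g) => //; rewrite ?l0 ?l1 //.
  by rewrite ler01 lexx.
apply: (le_trans (y := l)); last by rewrite lerDr exprn_ge0.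
by rewrite -[X in _ <= X]mulr1 ler_wpM2l.
Qed.

Lemma moment_bound (N m : nat) (l : R) : 0 <= l -> l <= 1 ->
  \sum_(b : {ffun 'I_N -> bool}) indic_law l b * (\sum_j ((b j)%:R : R)) ^+ m.+1
  <= (N%:R * l) ^+ m.+1 + ('C(m.+1, 2) * N ^ m)%:R * l.
Proof.
move=> l0 l1.
under eq_bigr do rewrite expand_pow mulr_sumr.
rewrite exchange_big /=.
under eq_bigr do rewrite Eg.
apply: (le_trans (y := \sum_(g : {ffun 'I_m.+1 -> 'I_N})
   (l ^+ m.+1 + (if injectiveb g then 0 else l)))).
  by apply: ler_sum => g _; exact: Eg_le.
rewrite big_split /= sumr_const card_ffun !card_ord.
rewrite exprMn -natrX mulr_natl lerD2l.
rewrite (eq_bigr (fun g : {ffun 'I_m.+1 -> 'I_N} =>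
   if ~~ injectiveb g then l else 0)); last by move=> g _; case: injectiveb.
rewrite -big_mkcond /= sumr_const -[l *+ _]mulr_natl.
apply: (ler_wpM2r l0).
rewrite ler_nat.
have hc := cardC [pred g : {ffun 'I_m.+1 -> 'I_N} | injectiveb g].
rewrite card_ffun !card_ord in hc.
have hi2 : #|[pred g : {ffun 'I_m.+1 -> 'I_N} | injectiveb g]| = N ^_ m.+1.
  have := card_inj_ffuns 'I_m.+1 'I_N; rewrite !card_ord => <-.
  by apply: eq_card => g; rewrite !inE.
have hb := exp_ffact_bound N m.+1.
rewrite /= in hb.
have -> : #|[pred g : {ffun 'I_m.+1 -> 'I_N} | ~~ injectiveb g]|
   = #|[predC [pred g : {ffun 'I_m.+1 -> 'I_N} | injectiveb g]]|.
  by apply: eq_card => g; rewrite !inE.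
rewrite hi2 in hc.
by rewrite -hc leq_add2l in hb.
Qed.

End comb2.

Section tail.
Variable R : realType.

Lemma WN_eq (N : nat) (l : R) (b : {ffun 'I_N -> bool}) :
  WN l b = (\sum_j ((b j)%:R : R)) / (N%:R * l).
Proof.
rewrite /WN invfM mulrCA; congr (_ * _).
rewrite mulr_suml; apply: eq_bigr => j _; case: (b j) => /=.
  by rewrite mul1r.
by rewrite mul0r.
Qed.

Lemma pt_bound (p : nat) (W s : R) : 0 <= W -> 0 < s ->
  W * (if s <= W then 1 else 0) <= W ^+ p.+1 / s ^+ p.
Proof.
move=> W0 s0; case: ifP => sW; last first.
  by rewrite mulr0 divr_ge0 // exprn_ge0 // ltW.
have -> : W ^+ p.+1 / s ^+ p = W * (W / s) ^+ p by rewrite expr_div_n exprS mulrA.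
rewrite mulr1.
rewrite -[X in X <= _]mulr1 ler_wpM2l // exprn_ege1 //.
by rewrite mulrC ler_pdivlMl // mulr1.
Qed.

Lemma tail_bound (N p : nat) (l s : R) : (0 < N)%N -> 0 < l -> l <= 1 -> 0 < s ->
  tilde_pi_tail N l s <= s ^- p * (1 + ('C(p.+1, 2))%:R / (N%:R * l ^+ p)).
Proof.
move=> N0 l0 l1 s0.
have P0 : forall b : {ffun 'I_N -> bool}, 0 <= indic_law l b.
  move=> b; apply: prodr_ge0 => j _; case: (b j); rewrite ?subr_ge0 // ltW //.
have W0 : forall b : {ffun 'I_N -> bool}, 0 <= WN l b.
  move=> b; rewrite WN_eq divr_ge0 //; last by rewrite mulr_ge0 // ltW.
  by apply: sumr_ge0 => j _; rewrite ler0n.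
apply: (le_trans (y := \sum_(b : {ffun 'I_N -> bool})
   indic_law l b * (WN l b ^+ p.+1 / s ^+ p))).
  by apply: ler_sum => b _; rewrite ler_wpM2l // pt_bound.
have -> : \sum_(b : {ffun 'I_N -> bool}) indic_law l b * (WN l b ^+ p.+1 / s ^+ p)
   = (s ^+ p * (N%:R * l) ^+ p.+1)^-1 *
     \sum_(b : {ffun 'I_N -> bool}) indic_law l b * (\sum_j ((b j)%:R : R)) ^+ p.+1.
  rewrite mulr_sumr; apply: eq_bigr => b _; rewrite WN_eq expr_div_n.
  by rewrite invfM; ring.
apply: (le_trans (ler_wpM2l _ (@moment_bound R N p l (ltW l0) l1))).
  by rewrite invr_ge0 mulr_ge0 // exprn_ge0 // ?mulr_ge0 // ltW.
have Nn0 : (N%:R : R) != 0 by rewrite pnatr_eq0 -lt0n.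
have ln0 : l != 0 by rewrite gt_eqF.
have sn0 : s != 0 by rewrite gt_eqF.
rewrite le_eqVlt; apply/orP; left; apply/eqP.
rewrite natrM natrX exprS exprMn.
have h1 : s ^+ p != 0 by rewrite expf_neq0.
have h2 : l ^+ p != 0 by rewrite expf_neq0.
have h3 : (N%:R : R) ^+ p != 0 by rewrite expf_neq0.
move: h1 h2 h3; set a := s ^+ p; set L := l ^+ p; set M := (N%:R : R) ^+ p => h1 h2 h3.
by field; rewrite ?Nn0 ?ln0 ?h1 ?h2 ?h3.
Qed.

End tail.

Lemma le_integral_nm (d : measure_display) (T : measurableType d) (R : realType)
  (mu : {measure set T -> \bar R}) (f1 f2 : T -> \bar R) :
  (forall x, (0 <= f1 x)%E) -> (forall x, (f1 x <= f2 x)%E) ->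
  (\int[mu]_x f1 x <= \int[mu]_x f2 x)%E.
Proof.
move=> f10 f12.
have f20 : forall x, (0 <= f2 x)%E by move=> x; exact: le_trans (f10 x) (f12 x).
rewrite (ge0_integralTE mu f10) (ge0_integralTE mu f20).
apply: ereal_sup_le => _ [h /= hf <-]; exists h => //= x.
exact: le_trans (hf x) (f12 x).
Qed.

Lemma tail_ge0 (R : realType) (N : nat) (l s : R) : 0 <= l -> l <= 1 ->
  0 <= tilde_pi_tail N l s.
Proof.
move=> l0 l1; apply: sumr_ge0 => b _; apply: mulr_ge0.
  by apply: prodr_ge0 => j _; case: (b j); rewrite ?subr_ge0.
apply: mulr_ge0; last by case: ifP.
rewrite /WN mulr_ge0 // ?invr_ge0 ?ler0n //.
by apply: sumr_ge0 => j _; case: (b j); rewrite ?invr_ge0.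
Qed.

Theorem proposition48 (R : realType) (d d' : measure_display)
  (X : measurableType d) (mu : {measure set X -> \bar R})
  (Y : measurableType d') (f : R.-pker X ~> Y) (B : set Y)
  (nu : X -> R) (p : nat) :
  (0 < p)%N ->
  measurable B ->
  measurable_fun setT nu ->
  (forall x, 0 <= nu x) ->
  (\int[mu]_x (nu x)%:E = 1)%E ->
  (forall x, 0 < ellABC f B x) ->
  (\int[mu]_x (nu x * (ellABC f B x) ^- p.-1)%:E < +oo)%E ->
  (* "in particular, the hypothesis holds for p = 1" *)
  (\int[mu]_x (nu x * (ellABC f B x) ^- (1%N.-1))%:E < +oo)%E /\
  exists C : nat -> R,
    (forall N, (0 < N)%N -> 0 < C N) /\
    (forall N (s : R), (0 < N)%N -> 0 < s ->
       (pi_integral mu nu (ellABC f B)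
          (fun x => tilde_pi_tail N (ellABC f B x) s)
        <= (C N * s ^- p)%:E)%E) /\
    (exists K : R, \forall N \near \oo%classic, `|C N - 1| <= K / N%:R).
Proof.
move=> p0 mB mnu nu0 nu1 lpos Iint.
split.
  have -> : (fun x => (nu x * ellABC f B x ^- (1%N.-1))%:E) = (fun x => (nu x)%:E).
    by apply: funext => x /=; rewrite expr0 invr1 mulr1.
  by rewrite nu1 ltry.
set l := ellABC f B.
have fxB : forall x, f x B = (l x)%:E.
  move=> x; rewrite /l /ellABC fineK // ge0_fin_numE ?measure_ge0 //.
  apply: (le_lt_trans (y := f x setT)); last by rewrite prob_kernel ltry.
  by apply: le_measure; rewrite ?inE.
have l1 : forall x, l x <= 1.
  move=> x; rewrite -lee_fin -fxB -(@prob_kernel _ _ _ _ _ f x).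
  by apply: le_measure; rewrite ?inE.
have l0 : forall x, 0 <= l x by move=> x; exact: ltW.
have ml : measurable_fun setT l.
  exact: (measurableT_comp _ (measurable_kernel f B mB)).
have mlinv : measurable_fun setT (fun x => l x ^- p.-1).
  have -> : (fun x => l x ^- p.-1) = GRing.inv \o (fun x => l x ^+ p.-1) by [].
  refine (@measurable_comp _ _ _ X R R [set` `]0%R, +oo[] (@GRing.inv R) setT (fun x => l x ^+ p.-1) _ _ _ _) => //.
  - by move=> _ [x _ <-]; rewrite /= in_itv /= andbT exprn_gt0.
  - apply: open_continuous_measurable_fun; first exact: interval_open.
    move=> x; rewrite inE /= in_itv /= andbT => x0.
    by apply: inv_continuous; rewrite gt_eqF.
  exact: measurable_funX.
have mnl : measurable_fun setT (fun x => nu x * l x) by exact: measurable_funM.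
have mnli : measurable_fun setT (fun x => nu x * l x ^- p.-1)
  by exact: measurable_funM.
set Z := normconst mu nu l.
set Iv := fine (\int[mu]_x (nu x * l x ^- p.-1)%:E)%E.
have nl0 : forall x, 0 <= nu x * l x by move=> x; rewrite mulr_ge0.
have nli0 : forall x, 0 <= nu x * l x ^- p.-1.
  by move=> x; rewrite mulr_ge0 // invr_ge0 exprn_ge0.
have hZ : (\int[mu]_x (nu x * l x)%:E = Z%:E)%E.
  rewrite /Z /normconst fineK // ge0_fin_numE; last by apply: integral_ge0 => y _; rewrite lee_fin nl0.
  apply: (le_lt_trans (y := (\int[mu]_x (nu x)%:E)%E)); last by rewrite nu1 ltry.
  apply: ge0_le_integral => //.
  - by move=> x _; rewrite lee_fin.
  - exact/measurable_EFinP.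
  - exact/measurable_EFinP.
  by move=> x _; rewrite lee_fin ler_piMr.
have hI : (\int[mu]_x (nu x * l x ^- p.-1)%:E = Iv%:E)%E.
  have hI0 : (0 <= \int[mu]_x (nu x * l x ^- p.-1)%:E)%E.
    by apply: integral_ge0 => y _; rewrite lee_fin nli0.
  by rewrite /Iv fineK // ge0_fin_numE.
have Z0 : 0 <= Z.
  rewrite -lee_fin -hZ; apply: integral_ge0 => y _; by rewrite lee_fin.
have I0 : 0 <= Iv.
  rewrite -lee_fin -hI; apply: integral_ge0 => y _; by rewrite lee_fin.
set c : R := ('C(p.+1, 2))%:R.
exists (fun N : nat => 1 + c * Iv / (Z * N%:R)%R).
split.
  move=> N _; apply: (lt_le_trans ltr01); rewrite lerDl.
  by rewrite divr_ge0 ?mulr_ge0.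
split; last first.
  exists (c * Iv / Z); apply: nearW => N.
  by rewrite [1 + _]addrC addrK invfM mulrA ger0_norm // divr_ge0 // divr_ge0 ?mulr_ge0.
move=> N s N0 s0.
have [q pq] : exists q, p = q.+1 by exists p.-1; rewrite prednK.
have Nn0 : (N%:R : R) != 0 by rewrite pnatr_eq0 -lt0n.
have key : forall x, nu x * l x / Z * (s ^- p * (1 + c / (N%:R * l x ^+ p)))
   = s ^- p / Z * (nu x * l x) + s ^- p * c / (Z * N%:R) * (nu x * l x ^- p.-1).
  move=> x; rewrite pq /=; set si := s ^- q.+1.
  rewrite (exprS (l x)) (invfM Z).
  have lx0 : l x != 0 by rewrite gt_eqF.
  have L0 : l x ^+ q != 0 by rewrite expf_neq0.
  move: L0; set L := l x ^+ q; set zi := Z^-1 => L0.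
  by field; rewrite ?lx0 ?L0 ?Nn0.
rewrite /pi_integral -/Z.
have sp0 : 0 <= s ^- p by rewrite invr_ge0 exprn_ge0 // ltW.
have a0 : 0 <= s ^- p / Z by rewrite divr_ge0.
have b0 : 0 <= s ^- p * c / (Z * N%:R) by rewrite divr_ge0 ?mulr_ge0.
apply: (le_trans (@le_integral_nm _ _ _ mu _ (fun x =>
   ((s ^- p / Z)%:E * (nu x * l x)%:E + (s ^- p * c / (Z * N%:R))%:E * (nu x * l x ^- p.-1)%:E)%E) _ _)).
- move=> x; rewrite lee_fin mulr_ge0 ?divr_ge0 //; exact: tail_ge0.
- move=> x; rewrite -!EFinM -EFinD lee_fin -key.
  apply: ler_wpM2l; first by rewrite divr_ge0.
  exact: tail_bound.
rewrite ge0_integralD //; first last.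
- by apply: measurable_funeM; exact/measurable_EFinP.
- by move=> x _; rewrite mule_ge0 // lee_fin.
- by apply: measurable_funeM; exact/measurable_EFinP.
- by move=> x _; rewrite mule_ge0 // lee_fin.
have iZ : forall (k : R) (g : X -> R), 0 <= k -> (forall x, 0 <= g x) ->
    measurable_fun setT g ->
    (\int[mu]_x (k%:E * (g x)%:E) = k%:E * \int[mu]_x (g x)%:E)%E.
  move=> k g k0 g0 mg; apply: ge0_integralZl_EFin => //.
  - by move=> x _; rewrite lee_fin.
  - exact/measurable_EFinP.
rewrite !iZ //.
rewrite hZ hI -!EFinM -EFinD lee_fin.
rewrite mulrDl mul1r; apply: lerD.
  rewrite mulrAC -mulrA; apply: ler_piMr => //.
  have [->|Zn0] := eqVneq Z 0; first by rewrite invr0 mulr0.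
  by rewrite divff.
have -> : c * Iv / (Z * N%:R) / s ^+ p = s ^- p * c / (Z * N%:R) * Iv by ring.
done.
Qed.
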